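(* Let $\Theta$ be finite, let $\mu$ be an updating rule that systematically distorts updated beliefs with distortion functions $(D_{p'})_{p'}$, and let $p\in\Delta(\Theta)$ have full support. Let $\sigma,\tau$ be experiments and $s,t$ signals, and set $q:=\mu_B(\sigma,p)(\cdot\mid s)$ and $r:=\mu_B(\tau,q)(\cdot\mid t)$, where $q$ and $D_p(q)$ have full support and $\sum_{\theta}q(\theta)\tau_\theta(t)>0$. Then \[\mu(\tau,D_p(q))(\cdot\mid t)=D_{D_p(q)}\!\left(\frac{r\cdot\frac{D_p(q)}{q}}{\sum_{\theta'\in\Theta}r(\theta')\frac{D_p(q)(\theta')}{q(\theta')}}\right),\] where products and quotients of beliefs are taken componentwise in $\theta$.
   Context: An experiment is $\tau=(\tau_\theta)_{\theta\in\Theta}$ with $\tau_\theta\in\Delta(S)$ for a fixed finite signal set $S$. An updating rule is a map $\mu$ sending an experiment $\sigma$, a prior $p\in\Delta(\Theta)$ and a signal $s\in S$ to a posterior $\mu(\sigma,p)(\cdot\mid s)\in\Delta(\Theta)$. Bayesian updating: $\mu_B(\sigma,p)(\theta\mid s)=\frac{\sigma_\theta(s)p(\theta)}{\sum_{\theta'}\sigma_{\theta'}(s)p(\theta')}$ whenever the denominator is positive. The rule $\mu$ systematically distorts updated beliefs if for every full-support prior $p'$ there is a function $D_{p'}:\Delta(\Theta)\to\Delta(\Theta)$ such that $\mu(\sigma,p')(\cdot\mid s)=D_{p'}(\mu_B(\sigma,p')(\cdot\mid s))$ for all experiments $\sigma$ and signals $s$. *)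

(* Defs.v *)
From HB Require Import structures.
From mathcomp Require Import all_boot all_order all_algebra.
Set Implicit Arguments. Unset Strict Implicit. Unset Printing Implicit Defensive.
Import Order.TTheory GRing.Theory Num.Theory.
Local Open Scope ring_scope.

Section Beliefs.
Variables (R : realFieldType) (T : finType).

Definition is_dist (f : {ffun T -> R}) : bool :=
  [forall x, 0 <= f x] && (\sum_x f x == 1).

Record belief := Belief { bel :> {ffun T -> R}; bel_dist : is_dist bel }.
HB.instance Definition _ := [isSub for bel].
HB.instance Definition _ := [Equality of belief by <:].

Definition full_support (p : belief) : Prop := forall x, 0 < p x.
End Beliefs.

Definition experiment (R : realFieldType) (Th S : finType) := Th -> belief R S.

Definition updating_rule (R : realFieldType) (Th S : finType) :=
  experiment R Th S -> belief R Th -> S -> belief R Th.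

Definition bayes_den (R : realFieldType) (Th S : finType)
  (sig : experiment R Th S) (p : belief R Th) (s : S) : R :=
  \sum_th sig th s * p th.

Definition bayes_fun (R : realFieldType) (Th S : finType)
  (sig : experiment R Th S) (p : belief R Th) (s : S) : {ffun Th -> R} :=
  [ffun th => sig th s * p th / bayes_den sig p s].

(* Only meaningful when bayes_den sig p s > 0
   (then bayes_fun is a distribution); otherwise a dummy value (the prior)
   is returned, which is never used in the statements below. *)
Definition bayes (R : realFieldType) (Th S : finType) : updating_rule R Th S :=
  fun sig p s => insubd p (bayes_fun sig p s).

Definition distorts_with (R : realFieldType) (Th S : finType)
  (mu : updating_rule R Th S) (D : belief R Th -> belief R Th -> belief R Th) : Prop :=
  forall p' : belief R Th, full_support p' ->
  forall (sig : experiment R Th S) (s : S), 0 < bayes_den sig p' s ->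
    mu sig p' s = D p' (bayes sig p' s).

Definition systematically_distorts (R : realFieldType) (Th S : finType)
  (mu : updating_rule R Th S) : Prop :=
  exists D, distorts_with mu D.

(* Packaged as a belief via insubd (default r, never used when the
   expression is a distribution, which is the case in the theorem). *)
Definition reweight_fun (R : realFieldType) (Th : finType) (r d q : belief R Th)
  : {ffun Th -> R} :=
  [ffun th => r th * (d th / q th) / \sum_th' r th' * (d th' / q th')].

Definition reweight (R : realFieldType) (Th : finType) (r d q : belief R Th)
  : belief R Th := insubd r (reweight_fun r d q).

(* Main.v *)
Require Import Defs.
From HB Require Import structures.
From mathcomp Require Import all_boot all_order all_algebra.
From mathcomp Require Import ring.
Import Order.TTheory GRing.Theory Num.Theory.
Local Open Scope ring_scope.

Lemma bayes_fun_dist (R : realFieldType) (Th S : finType)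
  (sig : experiment R Th S) (p : belief R Th) (s : S) :
  0 < bayes_den sig p s -> is_dist (bayes_fun sig p s).
Proof.
move=> hd; apply/andP; split.
  apply/forallP=> x; rewrite ffunE; apply: divr_ge0; last exact: ltW.
  have /andP[/forallP h1 _] := bel_dist (sig x).
  have /andP[/forallP h2 _] := bel_dist p.
  exact: mulr_ge0.
apply/eqP; under eq_bigr => x _ do rewrite ffunE.
by rewrite -mulr_suml -/(bayes_den sig p s) divff // gt_eqF.
Qed.

Lemma bayesE (R : realFieldType) (Th S : finType)
  (sig : experiment R Th S) (p : belief R Th) (s : S) :
  0 < bayes_den sig p s -> bayes sig p s = bayes_fun sig p s :> {ffun Th -> R}.
Proof. by move=> hd; rewrite /bayes insubdK //; apply: bayes_fun_dist. Qed.

Theorem lemma1 (R : realFieldType) (Th S : finType)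
  (mu : updating_rule R Th S) (D : belief R Th -> belief R Th -> belief R Th)
  (hD : distorts_with mu D)
  (p : belief R Th) (hp : full_support p)
  (sig tau : experiment R Th S) (s t : S)
  (hs : 0 < bayes_den sig p s) :
  let q := bayes sig p s in
  let r := bayes tau q t in
  full_support q -> full_support (D p q) ->
  0 < \sum_th q th * tau th t ->
  mu tau (D p q) t = D (D p q) (reweight r (D p q) q).
Proof.
move=> q r hq hd hsum.
set d := D p q.
have tau_ge0 : forall th, 0 <= tau th t.
  by move=> th; have /andP[/forallP h _] := bel_dist (tau th); apply: h.
have hq' : 0 < bayes_den tau q t.
  by rewrite /bayes_den; under eq_bigr => th _ do rewrite mulrC.
have hdd : 0 < bayes_den tau d t.
  rewrite /bayes_den; case: (ltrgtP 0 (\sum_th tau th t * d th)) => // H.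
  - have : \sum_th tau th t * d th >= 0 by apply: sumr_ge0 => th _; apply: mulr_ge0 => //; apply: ltW.
    by rewrite leNgt H.
  - have Hz : forall th, tau th t * d th = 0.
      move=> th; apply: (psumr_eq0P (P:=predT) (F:= fun th => tau th t * d th)) => //.
      by move=> i _; apply: mulr_ge0 => //; apply: ltW.
    have : \sum_th q th * tau th t = 0.
      apply: big1 => th _.
      have := Hz th; move/eqP; rewrite mulf_eq0 => /orP[/eqP -> |]; first by rewrite mulr0.
      by rewrite gt_eqF.
    by move=> E; rewrite E ltxx in hsum.
rewrite (hD d hd tau t hdd); congr (D d _).
apply: val_inj => /=.
rewrite bayesE // /reweight.
have Hr : forall th, r th = tau th t * q th / bayes_den tau q t.
  by move=> th; rewrite /r bayesE // ffunE.
have Hsum : \sum_th' r th' * (d th' / q th') = bayes_den tau d t / bayes_den tau q t.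
  rewrite {1}/bayes_den mulr_suml; apply: eq_bigr => th _; rewrite Hr.
  have := hq th; move=> hqt; field; by rewrite !gt_eqF.
have Heq : reweight_fun r d q = bayes_fun tau d t.
  apply/ffunP => th; rewrite !ffunE Hsum Hr.
  have := hq th; move=> hqt; field.
  by rewrite !gt_eqF.
by rewrite Heq insubdK //; apply: bayes_fun_dist.
Qed.
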